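(* Let $\mathbf K$ be a commutative field, $p,q\in\mathbb N$ and $A\in\mathrm{Rec}_{p\times q}(\mathbf K)$. The following are equivalent: (i) the set $\{A[U,W]:(U,W)\in\mathcal M_{p\times q}\}\subset\mathbf K$ is finite; (ii) for every $B\in\overline{A}^{rec}$ the set $\{B[U,W]:(U,W)\in\mathcal M_{p\times q}\}$ is finite; (iii) the recursive set-closure $\{\rho(S,T)A:(S,T)\in\mathcal M_{p\times q}\}$ is finite; (iv) the shift-monoid of $A$, i.e. the set of restrictions of all shift maps $\rho(S,T)$, $(S,T)\in\mathcal M_{p\times q}$, to $\overline{A}^{rec}$, is finite.
   Context: $\mathcal M_{p\times q}$ is the monoid of pairs $(U,W)$ of words of common length with $U$ over $\{0,\dots,p-1\}$, $W$ over $\{0,\dots,q-1\}$, under concatenation. For $A:\mathcal M_{p\times q}\to\mathbf K$ (values $A[U,W]$), shift maps act by $(\rho(S,T)A)[U,W]=A[US,WT]$. $\overline{A}^{rec}$ is the linear span of $\{\rho(S,T)A\}$ (an invariant subspace for all shift maps), and $\mathrm{Rec}_{p\times q}(\mathbf K)$ is the set of $A$ with $\dim\overline{A}^{rec}<\infty$. *)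

(* Defs.v *)
From HB Require Import structures.
From mathcomp Require Import all_boot all_order all_algebra.
Set Implicit Arguments. Unset Strict Implicit. Unset Printing Implicit Defensive.
Import GRing.Theory.
Local Open Scope ring_scope.

(* The monoid M_{p x q}: pairs (U,W) of words of common length,
   U over {0..p-1} = 'I_p, W over {0..q-1} = 'I_q. *)
Definition pw (p q : nat) := {x : seq 'I_p * seq 'I_q | size x.1 == size x.2}.

Lemma pw_cat_proof p q (a b : pw p q) :
  size ((val a).1 ++ (val b).1) == size ((val a).2 ++ (val b).2).
Proof. by rewrite !size_cat (eqP (valP a)) (eqP (valP b)). Qed.

Definition pw_cat p q (a b : pw p q) : pw p q :=
  exist _ ((val a).1 ++ (val b).1, (val a).2 ++ (val b).2) (pw_cat_proof a b).

Definition rho (K : fieldType) p q (ST : pw p q) (A : pw p q -> K) : pw p q -> K :=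
  fun UW => A (pw_cat UW ST).

(* B lies in the linear span  \bar{A}^{rec}  of {rho(S,T) A} *)
Definition in_rec_closure (K : fieldType) p q (A B : pw p q -> K) : Prop :=
  exists (n : nat) (c : 'I_n -> K) (s : 'I_n -> pw p q),
    B = (fun UW => \sum_(i < n) c i * rho (s i) A UW).

Definition in_span (K : fieldType) p q n (F : 'I_n -> (pw p q -> K)) (B : pw p q -> K) : Prop :=
  exists c : 'I_n -> K, B = (fun UW => \sum_(i < n) c i * F i UW).

(* A in Rec_{p x q}(K): dim \bar{A}^{rec} < oo, i.e. \bar{A}^{rec} is spanned
   by finitely many of its elements *)
Definition is_rec (K : fieldType) p q (A : pw p q -> K) : Prop :=
  exists (n : nat) (F : 'I_n -> (pw p q -> K)),
    (forall i, in_rec_closure A (F i)) /\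
    (forall B, in_rec_closure A B -> in_span F B).

Definition finite_values (K : fieldType) p q (B : pw p q -> K) : Prop :=
  exists s : seq K, forall UW, B UW \in s.

Definition finite_shift_set (K : fieldType) p q (A : pw p q -> K) : Prop :=
  exists (n : nat) (f : 'I_n -> (pw p q -> K)),
    forall ST, exists i, rho ST A = f i.

Definition finite_shift_monoid (K : fieldType) p q (A : pw p q -> K) : Prop :=
  exists (n : nat) (g : 'I_n -> pw p q),
    forall ST, exists i, forall B, in_rec_closure A B -> rho ST B = rho (g i) B.

(* Main.v *)
Require Import Defs.
From mathcomp Require Import all_boot all_order all_algebra.
From Stdlib Require Import Classical FunctionalExtensionality.
From mathcomp Require Import zify.
Set Implicit Arguments. Unset Strict Implicit. Unset Printing Implicit Defensive.
Import GRing.Theory.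
Local Open Scope ring_scope.
Lemma pw_cat_assoc p q (a b c : pw p q) :
  pw_cat (pw_cat a b) c = pw_cat a (pw_cat b c).
Proof. by apply: val_inj; rewrite /= !catA. Qed.

Definition pw_nil p q : pw p q := exist _ ([::], [::]) erefl.

Lemma pw_nil_cat p q (a : pw p q) : pw_cat (pw_nil p q) a = a.
Proof. by apply: val_inj; case: a => [[u w] h]. Qed.

Lemma pw_cat_nil p q (a : pw p q) : pw_cat a (pw_nil p q) = a.
Proof. by apply: val_inj; case: a => [[u w] h] /=; rewrite !cats0. Qed.

Lemma fin_key (Y : Type) (W : eqType) (L : seq W) (key : Y -> W)
  (R : Y -> Y -> Prop) :
  (forall y y', key y = key y' -> R y y') -> (forall y, key y \in L) ->
  exists n (g : 'I_n -> Y), forall y, exists i, R y (g i).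
Proof.
move=> HR HL.
suff : forall l : seq W, exists n (g : 'I_n -> Y), forall y, key y \in l -> exists i, R y (g i).
  by case/(_ L) => n [g Hg]; exists n, g => y; apply: Hg.
elim=> [|w l [n [g Hg]]]; first by exists 0, (fun i : 'I_0 => False_rect _ (notF (ltn_ord i))).
case: (classic (exists y0, key y0 = w)) => [[y0 Hy0]|Hno].
  exists n.+1, (fun i => match unlift ord_max i with Some j => g j | None => y0 end).
  move=> y; rewrite in_cons => /orP [/eqP Hw|Hy].
    by exists ord_max; rewrite unlift_none; apply: HR; rewrite Hw Hy0.
  have [j Hj] := Hg y Hy; exists (lift ord_max j); by rewrite liftK.
exists n, g => y; rewrite in_cons => /orP [/eqP Hw|Hy]; last exact: Hg.
by exfalso; apply: Hno; exists y.
Qed.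

Lemma tuples_list (W : eqType) (s : seq W) m :
  exists L : seq (seq W), forall t, size t = m -> all (mem s) t -> t \in L.
Proof.
elim: m => [|m [L HL]]; first by exists [:: [::]] => [[|]].
exists [seq a :: t | a <- s, t <- L] => [[|a t]] //= [Ht] /andP [Ha Hat].
by apply/allpairsP; exists (a, t); split => //; apply: HL.
Qed.

Definition vrow (K : fieldType) (X : Type) n (G : 'I_n -> X -> K) (x : X) : 'rV[K]_n :=
  \row_i G i x.
Definition Mpts (K : fieldType) (X : Type) n (G : 'I_n -> X -> K) (x0 : X) (l : seq X)
  : 'M[K]_(size l, n) := \matrix_(j, i) G i (nth x0 l j).

Lemma sep_pts (K : fieldType) (X : Type) n (G : 'I_n -> X -> K) (x0 : X) :
  exists l, forall y, (vrow G y <= Mpts G x0 l)%MS.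
Proof.
suff H : forall k l, (n - \rank (Mpts G x0 l) <= k)%N ->
  exists l', forall y, (vrow G y <= Mpts G x0 l')%MS.
  by apply: (H n [::]); rewrite leq_subr.
elim=> [|k IH] l Hk.
  exists l => y; apply: submx_full; rewrite /row_full eqn_leq rank_leq_col /=.
  by rewrite -subn_eq0 -leqn0.
case: (classic (forall y, (vrow G y <= Mpts G x0 l)%MS)) => [H|]; first by exists l.
move/not_all_ex_not => [y Hy].
have S1 : (Mpts G x0 l <= Mpts G x0 (y :: l))%MS.
  apply/row_subP => j; rewrite (_ : row j _ = row (lift ord0 j) (Mpts G x0 (y :: l))) ?row_sub //.
  by apply/matrixP => a b; rewrite !mxE.
have S2 : (vrow G y <= Mpts G x0 (y :: l))%MS.
  rewrite (_ : vrow G y = row ord0 (Mpts G x0 (y :: l))) ?row_sub //.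
  by apply/matrixP => a b; rewrite !mxE.
have Hlt : (Mpts G x0 l < Mpts G x0 (y :: l))%MS.
  rewrite ltmxE S1 /=; apply/negP => S3; apply: Hy; exact: submx_trans S2 S3.
apply: (IH (y :: l)).
have := rank_ltmx Hlt; have := rank_leq_col (Mpts G x0 (y :: l)).
move: (\rank _) (\rank _) Hk => a b; lia.
Qed.

Lemma sep_zero (K : fieldType) (X : Type) n (G : 'I_n -> X -> K) (x0 : X) l :
  (forall y, (vrow G y <= Mpts G x0 l)%MS) ->
  forall c : 'I_n -> K, (forall j, (j < size l)%N -> \sum_i c i * G i (nth x0 l j) = 0) ->
  forall y, \sum_i c i * G i y = 0.
Proof.
move=> Hl c Hc y; have /submxP [D HD] := Hl y.
have E i : G i y = \sum_j D 0 j * G i (nth x0 l j).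
  have := congr1 (fun M : 'rV[K]_n => M 0 i) HD; rewrite !mxE => ->.
  by apply: eq_bigr => j _; rewrite mxE.
under eq_bigr => i _ do rewrite E big_distrr.
rewrite exchange_big /= big1 // => j _.
rewrite (eq_bigr (fun i => D 0 j * (c i * G i (nth x0 l j)))) => [|i _]; last by rewrite mulrCA.
by rewrite -big_distrr /= Hc // mulr0.
Qed.

Lemma sep_eq (K : fieldType) p q n (G : 'I_n -> pw p q -> K) (x0 : pw p q) l :
  (forall y, (vrow G y <= Mpts G x0 l)%MS) ->
  forall H1 H2, in_span G H1 -> in_span G H2 ->
  (forall j, (j < size l)%N -> H1 (nth x0 l j) = H2 (nth x0 l j)) -> H1 = H2.
Proof.
move=> Hl H1 H2 [c1 ->] [c2 ->] Heq; apply: functional_extensionality => y.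
apply/eqP; rewrite -subr_eq0; apply/eqP.
have := sep_zero Hl (c := fun i => c1 i - c2 i).
have E x : \sum_i (c1 i - c2 i) * G i x = \sum_i c1 i * G i x - \sum_i c2 i * G i x.
  by rewrite -sumrB; apply: eq_bigr => i _; rewrite mulrBl.
move=> H; rewrite -E; apply: H => j Hj; rewrite E; apply/eqP; rewrite subr_eq0; apply/eqP; exact: Heq.
Qed.

Lemma closure_A (K : fieldType) p q (A : pw p q -> K) : in_rec_closure A A.
Proof.
exists 1, (fun _ => 1), (fun _ => pw_nil p q); apply: functional_extensionality => x.
by rewrite big_ord1 mul1r /rho pw_cat_nil.
Qed.

Lemma rho_closure (K : fieldType) p q (A B : pw p q -> K) ST :
  in_rec_closure A B -> in_rec_closure A (rho ST B).
Proof.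
move=> [m [c [s ->]]]; exists m, c, (fun i => pw_cat ST (s i)).
by apply: functional_extensionality => x; rewrite /rho; apply: eq_bigr => i _; rewrite pw_cat_assoc.
Qed.

Lemma sum_vals (K : fieldType) (X : Type) (s : seq K) m (c : 'I_m -> K) (f : 'I_m -> X -> K) :
  (forall i x, f i x \in s) -> exists L : seq K, forall x, \sum_i c i * f i x \in L.
Proof.
elim: m c f => [|m IH] c f Hf; first by exists [:: 0] => x; rewrite big_ord0 mem_seq1.
have [L HL] := IH (fun i => c (widen_ord (leqnSn m) i)) (fun i => f (widen_ord (leqnSn m) i)) (fun i => Hf _).
exists [seq a + c ord_max * b | a <- L, b <- s] => x; rewrite big_ord_recr /=.
apply/allpairsP; exists (\sum_(i < m) c (widen_ord (leqnSn m) i) * f (widen_ord (leqnSn m) i) x, f ord_max x).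
by split => //=; apply: Hf.
Qed.

Lemma vals_closure (K : fieldType) p q (A B : pw p q -> K) :
  finite_values A -> in_rec_closure A B -> finite_values B.
Proof.
move=> [s Hs] [m [c [t ->]]].
have [L HL] := @sum_vals K (pw p q) s m c (fun i x => rho (t i) A x) (fun i x => Hs _).
by exists L.
Qed.

Theorem mainTheorem16 (K : fieldType) (p q : nat) (A : pw p q -> K) :
  is_rec A ->
  [/\ finite_values A <-> (forall B, in_rec_closure A B -> finite_values B),
      finite_values A <-> finite_shift_set A
    & finite_values A <-> finite_shift_monoid A].
Proof.
move=> [n [G [HG Hspan]]].
set x0 := pw_nil p q.
have [l Hl] := sep_pts G x0.
have iii_i : finite_shift_set A -> finite_values A.
  move=> [m [f Hf]]; exists [seq f i x0 | i <- enum 'I_m] => UW.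
  have [i Hi] := Hf UW.
  rewrite -[UW]pw_nil_cat -/x0 (_ : A (pw_cat x0 UW) = rho UW A x0) // Hi.
  by apply: map_f; rewrite mem_enum.
have iv_iii : finite_shift_monoid A -> finite_shift_set A.
  move=> [m [g Hg]]; exists m, (fun i => rho (g i) A) => ST.
  by have [i Hi] := Hg ST; exists i; apply: Hi; apply: closure_A.
have i_iii : finite_values A -> finite_shift_set A.
  move=> [s Hs]; have [L HL] := tuples_list s (size l).
  have H1 : forall ST ST', [seq A (pw_cat x ST) | x <- l] = [seq A (pw_cat x ST') | x <- l] ->
     rho ST A = rho ST' A.
    move=> ST ST' Hk; apply: (sep_eq Hl); try exact/Hspan/rho_closure/closure_A.
    move=> j Hj; have := congr1 (fun t => nth 0 t j) Hk.
    by rewrite /rho /= !(nth_map x0).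
  have H2 : forall ST, [seq A (pw_cat x ST) | x <- l] \in L.
    move=> ST; apply: HL; first by rewrite size_map.
    by apply/allP => v /mapP [x _ ->]; exact: Hs.
  have [m [g Hg]] := fin_key H1 H2.
  by exists m, (fun i => rho (g i) A).
have i_iv : finite_values A -> finite_shift_monoid A.
  move=> HA.
  have /fin_all_exists [sf Hsf] i : exists s : seq K, forall x, G i x \in s.
    exact: vals_closure HA (HG i).
  set S := flatten [seq sf i | i <- enum 'I_n].
  have HS i x : G i x \in S by apply/flatten_mapP; exists i; rewrite ?mem_enum.
  have [L1 HL1] := tuples_list S (size l).
  have [L2 HL2] := tuples_list L1 n.
  pose key ST := [seq [seq G i (pw_cat x ST) | x <- l] | i <- enum 'I_n].
  have H1 : forall ST ST', key ST = key ST' ->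
     forall B, in_rec_closure A B -> rho ST B = rho ST' B.
    move=> ST ST' Hk.
    have HGi i : rho ST (G i) = rho ST' (G i).
      apply: (sep_eq Hl); try exact/Hspan/rho_closure/HG.
      move=> j Hj; move/eq_in_map: Hk => /(_ i); rewrite mem_enum => /(_ isT) Hk.
      have := congr1 (fun t => nth 0 t j) Hk.
      by rewrite /rho /= !(nth_map x0).
    move=> B /Hspan [d ->]; apply: functional_extensionality => UW.
    rewrite /rho; apply: eq_bigr => i _.
    by have := congr1 (fun f => f UW) (HGi i); rewrite /rho => ->.
  have H2 : forall ST, key ST \in L2.
    move=> ST; apply: HL2; first by rewrite size_map size_enum_ord.
    apply/allP => v /mapP [i _ ->]; apply: HL1; first by rewrite size_map.
    by apply/allP => w /mapP [x _ ->]; exact: HS.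
  have [m [g Hg]] := fin_key H1 H2.
  by exists m, g.
split; split => //.
- by move=> HA B; apply: vals_closure.
- by move/(_ A (closure_A A)).
- by move/iv_iii/iii_i.
Qed.
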